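(* Let $p\in[1,\infty]$, let $A\in\mathbb{R}^{m\times n}$ have full column rank, and let $\mathcal{A} = \{Ax: x\in\mathbb{R}^n\}$. Let $\Phi\in\mathbb{R}^{s\times m}$ with $s\ge n$, and suppose there are $\sigma_\Phi>0$, $\kappa_\Phi\ge1$ with $$\sigma_\Phi\|y\|_p \le \|\Phi y\|_p \le \kappa_\Phi\sigma_\Phi\|y\|_p\quad\text{for all } y\in\mathcal{A}.$$ Let $\Phi A = QR$ be a thin QR factorization, with $Q\in\mathbb{R}^{s\times n}$ having orthonormal columns and $R\in\mathbb{R}^{n\times n}$ invertible. Then $\kappa_p(AR^{-1}) \le \kappa_\Phi\, s^{|1/p-1/2|}$.
   Context: For $M \in \mathbb{R}^{m\times n}$, $\sigma_p^{\max}(M) = \max_{\|x\|_2=1}\|Mx\|_p$, $\sigma_p^{\min}(M) = \min_{\|x\|_2=1}\|Mx\|_p$, and $\kappa_p(M) = \sigma_p^{\max}(M)/\sigma_p^{\min}(M)$. Convention $1/\infty = 0$. *)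

(* Defs.v *)
From Stdlib Require Import Reals Lra Classical ClassicalEpsilon.
Open Scope R_scope.

(* Vectors of length n are functions nat -> R (only indices < n matter);
   an m x n matrix is a function nat -> nat -> R (only i < m, j < n matter). *)

Fixpoint rsum (n : nat) (f : nat -> R) : R :=
  match n with O => 0 | S k => rsum k f + f k end.

Fixpoint rmaxabs (n : nat) (f : nat -> R) : R :=
  match n with O => 0 | S k => Rmax (rmaxabs k f) (Rabs (f k)) end.

Definition matvec (n : nat) (M : nat -> nat -> R) (x : nat -> R) : nat -> R :=
  fun i => rsum n (fun j => M i j * x j).

Definition matmul (k : nat) (A B : nat -> nat -> R) : nat -> nat -> R :=
  fun i j => rsum k (fun l => A i l * B l j).

Inductive pexp := Pfin (p : R) | Pinf.

Definition valid_p (p : pexp) : Prop :=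
  match p with Pfin q => 1 <= q | Pinf => True end.

Definition invp (p : pexp) : R :=
  match p with Pfin q => / q | Pinf => 0 end.

(* x^y for x >= 0, y > 0, with 0^y = 0 *)
Definition rpow0 (x y : R) : R :=
  if Req_EM_T x 0 then 0 else Rpower x y.

Definition pnorm (n : nat) (p : pexp) (x : nat -> R) : R :=
  match p with
  | Pfin q => rpow0 (rsum n (fun i => rpow0 (Rabs (x i)) q)) (/ q)
  | Pinf => rmaxabs n x
  end.

Definition norm2 (n : nat) (x : nat -> R) : R :=
  sqrt (rsum n (fun i => x i * x i)).

(* Supremum of a nonempty bounded-above set (default 0 otherwise). *)
Definition Rsup (E : R -> Prop) : R :=
  match excluded_middle_informative (bound E /\ exists x, E x) with
  | left H => proj1_sig (completeness E (proj1 H) (proj2 H))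
  | right _ => 0
  end.

Definition Rinf (E : R -> Prop) : R := - Rsup (fun y => E (- y)).

(* sigma_p^max(M), sigma_p^min(M) for M : m x n (max/min over the unit 2-sphere;
   these are attained, so they coincide with sup/inf). *)
Definition sigma_max (m n : nat) (p : pexp) (M : nat -> nat -> R) : R :=
  Rsup (fun v => exists x, norm2 n x = 1 /\ v = pnorm m p (matvec n M x)).

Definition sigma_min (m n : nat) (p : pexp) (M : nat -> nat -> R) : R :=
  Rinf (fun v => exists x, norm2 n x = 1 /\ v = pnorm m p (matvec n M x)).

(* kappa_p(M) as an extended real: None = +oo (when sigma_min = 0). *)
Definition kappa (m n : nat) (p : pexp) (M : nat -> nat -> R) : option R :=
  if Req_EM_T (sigma_min m n p M) 0 then None
  else Some (sigma_max m n p M / sigma_min m n p M).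

Definition ext_le (a : option R) (c : R) : Prop :=
  match a with Some x => x <= c | None => False end.

(* Main.v *)
Require Import Defs.
From Stdlib Require Import Reals Lra Lia Classical ClassicalEpsilon FunctionalExtensionality.
Open Scope R_scope.

Lemma Rpower_pos x y : 0 < Rpower x y.
Proof. unfold Rpower; apply exp_pos. Qed.

Lemma Rpower_base_le_neg a b e : e <= 0 -> 0 < a <= b -> Rpower b e <= Rpower a e.
Proof.
  intros He Hab.
  replace e with (- - e) by ring. rewrite (Rpower_Ropp b (- e)), (Rpower_Ropp a (- e)).
  apply Rinv_le_contravar. apply Rpower_pos.
  apply Rle_Rpower_l; lra.
Qed.

Lemma Rpower_mvt g a b : 0 < a < b ->
  exists c, a < c < b /\ Rpower b g - Rpower a g = g * Rpower c (g - 1) * (b - a).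
Proof.
  intros [Ha Hab].
  destruct (MVT_cor2 (fun x => Rpower x g) (fun x => g * Rpower x (g - 1)) a b Hab)
    as [c [Hc1 Hc2]].
  - intros c Hc. apply derivable_pt_lim_power. lra.
  - exists c. split; [exact Hc2|exact Hc1].
Qed.

Lemma Rpower_tangent_aux g c : 0 < c -> Rpower c (g - 1) * c = Rpower c g.
Proof.
  intros Hc. rewrite <- (Rpower_1 c) at 2 by exact Hc.
  rewrite <- Rpower_plus. f_equal; ring.
Qed.

Lemma tangent_ge g c t : 1 <= g -> 0 < c -> 0 <= t ->
  Rpower c g + g * Rpower c (g - 1) * (t - c) <= rpow0 t g.
Proof.
  intros Hg Hc Ht. pose proof (Rpower_tangent_aux g c Hc) as Hx.
  pose proof (Rpower_pos c g). pose proof (Rpower_pos c (g-1)).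
  unfold rpow0. destruct (Req_EM_T t 0) as [E|E].
  - subst t. nra.
  - destruct (Rtotal_order t c) as [Hlt|[Heq|Hgt]].
    + destruct (Rpower_mvt g t c) as [x [Hx1 Hx2]]; [lra|].
      assert (Rpower x (g-1) <= Rpower c (g-1)) by (apply Rle_Rpower_l; lra).
      assert (g * Rpower x (g - 1) * (c - t) <= g * Rpower c (g - 1) * (c - t)).
      { apply Rmult_le_compat_r; [lra|]. apply Rmult_le_compat_l; lra. }
      lra.
    + subst. lra.
    + destruct (Rpower_mvt g c t) as [x [Hx1 Hx2]]; [lra|].
      assert (Rpower c (g-1) <= Rpower x (g-1)) by (apply Rle_Rpower_l; lra).
      assert (g * Rpower c (g - 1) * (t - c) <= g * Rpower x (g - 1) * (t - c)).
      { apply Rmult_le_compat_r; [lra|]. apply Rmult_le_compat_l; lra. }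
      lra.
Qed.

Lemma tangent_le g c t : 0 < g <= 1 -> 0 < c -> 0 <= t ->
  rpow0 t g <= Rpower c g + g * Rpower c (g - 1) * (t - c).
Proof.
  intros Hg Hc Ht. pose proof (Rpower_tangent_aux g c Hc) as Hx.
  pose proof (Rpower_pos c g). pose proof (Rpower_pos c (g-1)).
  unfold rpow0. destruct (Req_EM_T t 0) as [E|E].
  - subst t. nra.
  - destruct (Rtotal_order t c) as [Hlt|[Heq|Hgt]].
    + destruct (Rpower_mvt g t c) as [x [Hx1 Hx2]]; [lra|].
      assert (Rpower c (g-1) <= Rpower x (g-1)) by (apply Rpower_base_le_neg; lra).
      assert (g * Rpower c (g - 1) * (c - t) <= g * Rpower x (g - 1) * (c - t)).
      { apply Rmult_le_compat_r; [lra|]. apply Rmult_le_compat_l; lra. }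
      lra.
    + subst. lra.
    + destruct (Rpower_mvt g c t) as [x [Hx1 Hx2]]; [lra|].
      assert (Rpower x (g-1) <= Rpower c (g-1)) by (apply Rpower_base_le_neg; lra).
      assert (g * Rpower x (g - 1) * (t - c) <= g * Rpower c (g - 1) * (t - c)).
      { apply Rmult_le_compat_r; [lra|]. apply Rmult_le_compat_l; lra. }
      lra.
Qed.

Lemma rsum_ext n f g : (forall i, (i < n)%nat -> f i = g i) -> rsum n f = rsum n g.
Proof. induction n; simpl; intros H; auto. rewrite IHn by (intros; apply H; lia). rewrite H by lia. auto. Qed.

Lemma rsum_plus n f g : rsum n (fun i => f i + g i) = rsum n f + rsum n g.
Proof. induction n; simpl; [ring|rewrite IHn; ring]. Qed.

Lemma rsum_scal n c f : rsum n (fun i => c * f i) = c * rsum n f.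
Proof. induction n; simpl; [ring|rewrite IHn; ring]. Qed.

Lemma rsum_scal_r n c f : rsum n (fun i => f i * c) = rsum n f * c.
Proof. induction n; simpl; [ring|rewrite IHn; ring]. Qed.

Lemma rsum_zero n : rsum n (fun _ => 0) = 0.
Proof. induction n; simpl; [ring|rewrite IHn; ring]. Qed.

Lemma rsum_swap n m (f : nat -> nat -> R) :
  rsum n (fun i => rsum m (fun j => f i j)) = rsum m (fun j => rsum n (fun i => f i j)).
Proof.
  induction n; simpl.
  - symmetry; apply rsum_zero.
  - rewrite IHn. rewrite <- rsum_plus. reflexivity.
Qed.

Lemma rsum_le n f g : (forall i, (i < n)%nat -> f i <= g i) -> rsum n f <= rsum n g.
Proof. induction n; simpl; intros H; [lra|]. assert (f n <= g n) by (apply H; lia).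
  assert (rsum n f <= rsum n g) by (apply IHn; intros; apply H; lia). lra. Qed.

Lemma rsum_const n c : rsum n (fun _ => c) = INR n * c.
Proof. induction n; simpl rsum; [simpl; ring|rewrite IHn, S_INR; ring]. Qed.

Lemma rsum_nonneg n f : (forall i, (i < n)%nat -> 0 <= f i) -> 0 <= rsum n f.
Proof. intros H. rewrite <- (rsum_zero n). apply rsum_le. auto. Qed.

Lemma rsum_term n f k : (k < n)%nat -> (forall i, (i < n)%nat -> 0 <= f i) -> f k <= rsum n f.
Proof.
  induction n; simpl; intros Hk H; [lia|].
  assert (0 <= rsum n f) by (apply rsum_nonneg; intros; apply H; lia).
  destruct (Nat.eq_dec k n).
  - subst. lra.
  - assert (f k <= rsum n f) by (apply IHn; [lia|intros; apply H; lia]).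
    assert (0 <= f n) by (apply H; lia). lra.
Qed.

Lemma rsum_delta n k (f : nat -> R) : (k < n)%nat ->
  rsum n (fun j => if Nat.eq_dec j k then f j else 0) = f k.
Proof.
  induction n; simpl; intros Hk; [lia|].
  destruct (Nat.eq_dec n k).
  - subst. rewrite (rsum_ext _ _ (fun _ => 0)). rewrite rsum_zero; ring.
    intros i Hi. destruct (Nat.eq_dec i k); [lia|auto].
  - rewrite IHn by lia. ring.
Qed.

Lemma rpow0_pos x y : 0 < x -> rpow0 x y = Rpower x y.
Proof. intros. unfold rpow0. destruct (Req_EM_T x 0); [lra|auto]. Qed.

Lemma rpow0_nonneg x y : 0 <= rpow0 x y.
Proof. unfold rpow0. destruct (Req_EM_T x 0); [lra|left; apply Rpower_pos]. Qed.

Lemma Rpower_1_base x : Rpower 1 x = 1.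
Proof. unfold Rpower. rewrite ln_1, Rmult_0_r. apply exp_0. Qed.

Lemma rpow0_abs_sq x q : 0 < q -> rpow0 (Rabs x) q = rpow0 (x * x) (q / 2).
Proof.
  intros Hq. destruct (Req_EM_T x 0) as [E|E].
  - subst. rewrite Rabs_R0, Rmult_0_r. unfold rpow0.
    destruct (Req_EM_T 0 0); [auto|lra].
  - assert (Ha : 0 < Rabs x) by (apply Rabs_pos_lt; auto).
    assert (Hxx : x * x = Rpower (Rabs x) 2).
    { replace 2 with (INR 2) by (simpl; ring). rewrite Rpower_pow by auto.
      simpl. rewrite Rmult_1_r, <- Rabs_mult, Rabs_right; [ring|nra]. }
    assert (0 < x * x) by nra.
    rewrite !rpow0_pos by auto. rewrite Hxx, Rpower_mult. f_equal. field.
Qed.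

Lemma unit_ge g t : 1 <= g -> 0 <= t <= 1 -> rpow0 t g <= t.
Proof.
  intros Hg Ht. unfold rpow0. destruct (Req_EM_T t 0); [lra|].
  rewrite <- Rpower_tangent_aux by lra.
  assert (Rpower t (g-1) <= Rpower 1 (g-1)) by (apply Rle_Rpower_l; lra).
  rewrite Rpower_1_base in H. nra.
Qed.

Lemma unit_le g t : g <= 1 -> 0 <= t <= 1 -> t <= rpow0 t g.
Proof.
  intros Hg Ht. unfold rpow0. destruct (Req_EM_T t 0); [lra|].
  rewrite <- Rpower_tangent_aux by lra.
  assert (Rpower 1 (g-1) <= Rpower t (g-1)) by (apply Rpower_base_le_neg; lra).
  rewrite Rpower_1_base in H. nra.
Qed.

Lemma Rpower_inv_base x g : 0 < x -> Rpower (/ x) g = Rpower x (- g).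
Proof. intros. unfold Rpower. rewrite ln_Rinv by auto. f_equal; ring. Qed.

Lemma rmaxabs_nonneg n f : 0 <= rmaxabs n f.
Proof. induction n; simpl; [lra|]. eapply Rle_trans; [exact IHn|apply Rmax_l]. Qed.

Lemma rmaxabs_ge n f k : (k < n)%nat -> Rabs (f k) <= rmaxabs n f.
Proof.
  induction n; simpl; intros Hk; [lia|].
  destruct (Nat.eq_dec k n).
  - subst. apply Rmax_r.
  - eapply Rle_trans; [apply IHn; lia|apply Rmax_l].
Qed.

Lemma rmaxabs_le n f M : 0 <= M -> (forall i, (i < n)%nat -> Rabs (f i) <= M) -> rmaxabs n f <= M.
Proof.
  induction n; simpl; intros HM H; [lra|].
  apply Rmax_lub; [apply IHn; auto|apply H; lia].
Qed.

Lemma coord_le1 s v i : rsum s (fun i => v i * v i) = 1 -> (i < s)%nat -> v i * v i <= 1.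
Proof.
  intros H Hi. rewrite <- H. apply (rsum_term s (fun i => v i * v i)); auto.
  intros; nra.
Qed.

Lemma norm_equiv s p v : (1 <= s)%nat -> valid_p p ->
  rsum s (fun i => v i * v i) = 1 ->
  Rpower (INR s) (Rmin 0 (invp p - / 2)) <= pnorm s p v /\
  pnorm s p v <= Rpower (INR s) (Rmax 0 (invp p - / 2)).
Proof.
  intros Hs Hp Hv.
  assert (HS : 1 <= INR s) by (apply (le_INR 1); auto).
  assert (HS0 : 0 < INR s) by lra.
  destruct p as [q|]; simpl in Hp |- *.
  - assert (Hq : 0 < q) by lra.
    assert (Hsum : rsum s (fun i => rpow0 (Rabs (v i)) q) = rsum s (fun i => rpow0 (v i * v i) (q / 2))).
    { apply rsum_ext; intros; apply rpow0_abs_sq; auto. }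
    rewrite Hsum.
    set (S := rsum s (fun i => rpow0 (v i * v i) (q / 2))).
    set (c := / INR s).
    assert (Hc : 0 < c) by (apply Rinv_0_lt_compat; lra).
    assert (Hsc : INR s * Rpower c (q / 2) = Rpower (INR s) (1 - q / 2)).
    { unfold c. rewrite Rpower_inv_base by lra.
      rewrite <- (Rpower_1 (INR s)) at 1 by lra. rewrite <- Rpower_plus. f_equal; ring. }
    assert (Htan : rsum s (fun i => Rpower c (q/2) + q/2 * Rpower c (q/2 - 1) * (v i * v i - c))
                   = INR s * Rpower c (q / 2)).
    { rewrite rsum_plus, rsum_const. rewrite (rsum_ext _ _ (fun i => q/2 * Rpower c (q/2 - 1) * (v i * v i) + q/2 * Rpower c (q/2 - 1) * (- c))) by (intros; ring). rewrite rsum_plus, rsum_scal, rsum_const, Hv.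
      unfold c. field. lra. }
    assert (Hpow : Rpower (Rpower (INR s) (1 - q / 2)) (/ q) = Rpower (INR s) (/ q - / 2)).
    { rewrite Rpower_mult. f_equal. field. lra. }
    destruct (Rle_dec 2 q) as [H2|H2].
    + assert (He : / q - / 2 <= 0).
      { assert (/ q <= / 2) by (apply Rinv_le_contravar; lra). lra. }
      rewrite Rmin_right, Rmax_left by lra. rewrite Rpower_O by lra.
      assert (HSge : Rpower (INR s) (1 - q / 2) <= S).
      { rewrite <- Hsc, <- Htan. apply rsum_le. intros i Hi.
        apply tangent_ge; [lra|auto|nra]. }
      assert (HSle : S <= 1).
      { rewrite <- Hv. apply rsum_le. intros i Hi. apply unit_ge; [lra|].
        split; [nra|apply (coord_le1 s); auto]. }
      pose proof (Rpower_pos (INR s) (1 - q/2)).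
      rewrite rpow0_pos by lra. split.
      * rewrite <- Hpow. apply Rle_Rpower_l; [left; apply Rinv_0_lt_compat; lra|lra].
      * rewrite <- (Rpower_1_base (/ q)). apply Rle_Rpower_l; [left; apply Rinv_0_lt_compat; lra|lra].
    + assert (He : 0 <= / q - / 2).
      { assert (/ 2 <= / q) by (apply Rinv_le_contravar; lra). lra. }
      rewrite Rmin_left, Rmax_right by lra. rewrite Rpower_O by lra.
      assert (HSle : S <= Rpower (INR s) (1 - q / 2)).
      { rewrite <- Hsc, <- Htan. apply rsum_le. intros i Hi.
        apply tangent_le; [lra|auto|nra]. }
      assert (HSge : 1 <= S).
      { rewrite <- Hv. apply rsum_le. intros i Hi. apply unit_le; [lra|].
        split; [nra|apply (coord_le1 s); auto]. }
      rewrite rpow0_pos by lra. split.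
      * rewrite <- (Rpower_1_base (/ q)). apply Rle_Rpower_l; [left; apply Rinv_0_lt_compat; lra|lra].
      * rewrite <- Hpow. apply Rle_Rpower_l; [left; apply Rinv_0_lt_compat; lra|lra].
  - rewrite Rmin_right, Rmax_left by lra. rewrite Rpower_O by lra.
    replace (0 - / 2) with (- / 2) by ring.
    rewrite Rpower_Ropp, Rpower_sqrt by lra.
    pose proof (rmaxabs_nonneg s v) as HM0.
    split.
    + set (M := rmaxabs s v) in *.
      assert (HM : 1 <= INR s * (M * M)).
      { rewrite <- Hv, <- rsum_const. apply rsum_le. intros i Hi.
        pose proof (rmaxabs_ge s v i Hi). fold M in H.
        replace (v i * v i) with (Rabs (v i) * Rabs (v i)).
        { apply Rmult_le_compat; auto using Rabs_pos. }
        rewrite <- Rabs_mult; apply Rabs_right; nra. }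
      pose proof (sqrt_lt_R0 (INR s) HS0) as Hq0. pose proof (sqrt_sqrt (INR s) (Rlt_le _ _ HS0)) as Hq1.
      apply (Rmult_le_reg_l (sqrt (INR s))); auto. rewrite Rinv_r by lra.
      destruct (Rle_lt_dec 1 (sqrt (INR s) * M)) as [h|h]; [auto|].
      assert (0 <= sqrt (INR s) * M) by nra.
      assert (h2 : (sqrt (INR s) * M) * (sqrt (INR s) * M) < 1) by nra.
      replace ((sqrt (INR s) * M) * (sqrt (INR s) * M)) with (sqrt (INR s) * sqrt (INR s) * (M * M)) in h2 by ring.
      rewrite Hq1 in h2. lra.
    + apply rmaxabs_le; [lra|]. intros i Hi. pose proof (coord_le1 s v i Hv Hi).
      rewrite <- (Rabs_right 1) by lra. apply Rsqr_le_abs_0. unfold Rsqr. lra.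
Qed.

Lemma Rsup_le (E : R -> Prop) U : (exists x, E x) -> (forall v, E v -> v <= U) -> Rsup E <= U.
Proof.
  intros Hne Hb. unfold Rsup.
  destruct (excluded_middle_informative _) as [a|a].
  - destruct (completeness E (proj1 a) (proj2 a)) as [l [Hl1 Hl2]]. simpl.
    apply Hl2. intros v Hv. auto.
  - exfalso. apply a. split; [exists U; intros v Hv; auto|auto].
Qed.

Lemma Rinf_ge (E : R -> Prop) L : (exists x, E x) -> (forall v, E v -> L <= v) -> L <= Rinf E.
Proof.
  intros [x Hx] Hb. unfold Rinf.
  assert (Rsup (fun y => E (- y)) <= - L).
  { apply Rsup_le. exists (- x). rewrite Ropp_involutive; auto.
    intros v Hv. apply Hb in Hv. lra. }
  lra.
Qed.

Lemma pnorm_ext n p f g : (forall i, (i < n)%nat -> f i = g i) -> pnorm n p f = pnorm n p g.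
Proof.
  intros H. destruct p; simpl.
  - f_equal. apply rsum_ext. intros i Hi. rewrite H; auto.
  - induction n; simpl; auto. rewrite IHn by (intros; apply H; lia). rewrite H by lia. auto.
Qed.

Lemma pnorm_nonneg n p f : 0 <= pnorm n p f.
Proof. destruct p; simpl; [apply rpow0_nonneg|apply rmaxabs_nonneg]. Qed.

Lemma matvec_matmul k n M N y i :
  matvec k M (matvec n N y) i = matvec n (matmul k M N) y i.
Proof.
  unfold matvec, matmul.
  rewrite (rsum_ext n (fun j => rsum k (fun l => M i l * N l j) * y j)
                      (fun j => rsum k (fun l => M i l * (N l j * y j))))
    by (intros; rewrite <- rsum_scal_r; apply rsum_ext; intros; ring).
  rewrite <- rsum_swap. apply rsum_ext; intros; rewrite rsum_scal; auto.
Qed.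

Lemma orth_norm s n Q x :
  (forall j k, (j < n)%nat -> (k < n)%nat ->
     rsum s (fun i => Q i j * Q i k) = if Nat.eq_dec j k then 1 else 0) ->
  rsum s (fun i => matvec n Q x i * matvec n Q x i) = rsum n (fun j => x j * x j).
Proof.
  intros HQ. unfold matvec.
  rewrite (rsum_ext s _ (fun i => rsum n (fun j => rsum n (fun k => Q i j * x j * (Q i k * x k)))))
    by (intros; rewrite <- rsum_scal_r; apply rsum_ext; intros; rewrite <- rsum_scal; auto).
  rewrite rsum_swap. apply rsum_ext. intros j Hj.
  rewrite rsum_swap.
  rewrite (rsum_ext n _ (fun k => if Nat.eq_dec k j then x j * x k else 0)).
  - apply rsum_delta; auto.
  - intros k Hk.
    rewrite (rsum_ext s _ (fun i => (x j * x k) * (Q i j * Q i k))) by (intros; ring).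
    rewrite rsum_scal, HQ by auto.
    destruct (Nat.eq_dec j k), (Nat.eq_dec k j); try lia; ring.
Qed.

Theorem mainTheorem7
  (p : pexp) (m n s : nat)
  (A Phi Q Rm Rinv : nat -> nat -> R) (sigPhi kapPhi : R) :
  valid_p p ->
  (1 <= n)%nat ->
  (forall x : nat -> R, (forall i, (i < m)%nat -> matvec n A x i = 0) ->
     forall j, (j < n)%nat -> x j = 0) ->
  (n <= s)%nat ->
  0 < sigPhi -> 1 <= kapPhi ->
  (forall x : nat -> R,
     sigPhi * pnorm m p (matvec n A x) <= pnorm s p (matvec m Phi (matvec n A x)) /\
     pnorm s p (matvec m Phi (matvec n A x)) <= kapPhi * sigPhi * pnorm m p (matvec n A x)) ->
  (forall i j, (i < s)%nat -> (j < n)%nat ->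
     matmul m Phi A i j = matmul n Q Rm i j) ->
  (forall j k, (j < n)%nat -> (k < n)%nat ->
     rsum s (fun i => Q i j * Q i k) = if Nat.eq_dec j k then 1 else 0) ->
  (forall j k, (j < n)%nat -> (k < n)%nat ->
     matmul n Rm Rinv j k = (if Nat.eq_dec j k then 1 else 0) /\
     matmul n Rinv Rm j k = (if Nat.eq_dec j k then 1 else 0)) ->
  ext_le (kappa m n p (matmul n A Rinv))
         (kapPhi * Rpower (INR s) (Rabs (invp p - / 2))).
Proof.
  intros Hp Hn Hrank Hns Hsig Hkap Hemb HQR HQ HR.
  set (e := invp p - / 2).
  set (U := Rpower (INR s) (Rmax 0 e)).
  set (L := Rpower (INR s) (Rmin 0 e)).
  assert (HU : 0 < U) by apply Rpower_pos.
  assert (HL : 0 < L) by apply Rpower_pos.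
  assert (Hs : (1 <= s)%nat) by lia.
  assert (Key : forall x, norm2 n x = 1 ->
            L / (kapPhi * sigPhi) <= pnorm m p (matvec n (matmul n A Rinv) x) <= U / sigPhi).
  { intros x Hx.
    set (y := matvec n Rinv x).
    assert (E1 : matvec n (matmul n A Rinv) x = matvec n A y).
    { apply functional_extensionality. intros i. unfold y. rewrite matvec_matmul. auto. }
    assert (E2 : forall i, (i < s)%nat -> matvec m Phi (matvec n A y) i = matvec n Q x i).
    { intros i Hi. rewrite matvec_matmul.
      transitivity (matvec n (matmul n Q Rm) y i).
      { unfold matvec. apply rsum_ext. intros j Hj. rewrite HQR; auto. }
      rewrite <- matvec_matmul. unfold matvec at 1. apply rsum_ext. intros t Ht.
      f_equal. unfold y. rewrite matvec_matmul. unfold matvec.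
      rewrite (rsum_ext n _ (fun k => if Nat.eq_dec k t then x k else 0)).
      - apply rsum_delta; auto.
      - intros k Hk. rewrite (proj1 (HR t k Ht Hk)).
        destruct (Nat.eq_dec t k), (Nat.eq_dec k t); try lia; subst; ring. }
    assert (Hx2 : rsum n (fun j => x j * x j) = 1).
    { unfold norm2 in Hx.
      assert (0 <= rsum n (fun j => x j * x j)) by (apply rsum_nonneg; intros; nra).
      rewrite <- (sqrt_sqrt _ H), Hx. ring. }
    assert (HN : rsum s (fun i => matvec n Q x i * matvec n Q x i) = 1)
      by (rewrite orth_norm; auto).
    destruct (norm_equiv s p (matvec n Q x) Hs Hp HN) as [Hlo Hhi].
    fold e U L in Hlo, Hhi.
    rewrite <- (pnorm_ext s p _ _ E2) in Hlo, Hhi.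
    destruct (Hemb y) as [H1 H2].
    rewrite E1. pose proof (pnorm_nonneg m p (matvec n A y)).
    split.
    - apply (Rmult_le_reg_l (kapPhi * sigPhi)); [nra|].
      replace (kapPhi * sigPhi * (L / (kapPhi * sigPhi))) with L by (field; lra). lra.
    - apply (Rmult_le_reg_l sigPhi); [lra|].
      replace (sigPhi * (U / sigPhi)) with U by (field; lra). lra. }
  set (x0 := fun j : nat => if Nat.eq_dec j 0 then 1 else 0).
  assert (Hx0 : norm2 n x0 = 1).
  { unfold norm2. rewrite (rsum_ext n _ (fun j => if Nat.eq_dec j 0 then 1 else 0)).
    - rewrite (rsum_delta n 0 (fun _ => 1)) by lia. apply sqrt_1.
    - intros j Hj. unfold x0. destruct (Nat.eq_dec j 0); ring. }
  set (E := fun v => exists x, norm2 n x = 1 /\ v = pnorm m p (matvec n (matmul n A Rinv) x)).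
  assert (Hne : exists v, E v) by (exists (pnorm m p (matvec n (matmul n A Rinv) x0)); exists x0; auto).
  assert (Hmax : sigma_max m n p (matmul n A Rinv) <= U / sigPhi).
  { apply Rsup_le; auto. intros v [x [Hx ->]]. apply Key; auto. }
  assert (Hmin : L / (kapPhi * sigPhi) <= sigma_min m n p (matmul n A Rinv)).
  { apply Rinf_ge; auto. intros v [x [Hx ->]]. apply Key; auto. }
  assert (HLp : 0 < L / (kapPhi * sigPhi)) by (apply Rdiv_lt_0_compat; nra).
  unfold kappa. destruct (Req_EM_T _ 0) as [Z|Z]; [lra|]. simpl.
  set (smax := sigma_max m n p (matmul n A Rinv)) in *.
  set (smin := sigma_min m n p (matmul n A Rinv)) in *.
  assert (HUL : Rpower (INR s) (Rabs e) = U / L).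
  { unfold U, L, Rdiv. rewrite <- Rpower_Ropp, <- Rpower_plus. f_equal.
    unfold Rmax, Rmin, Rabs. destruct (Rle_dec 0 e), (Rcase_abs e); lra. }
  fold e. rewrite HUL.
  assert (Hinv : / smin <= kapPhi * sigPhi / L).
  { replace (kapPhi * sigPhi / L) with (/ (L / (kapPhi * sigPhi))) by (field; lra).
    apply Rinv_le_contravar; auto. }
  assert (0 < / smin) by (apply Rinv_0_lt_compat; lra).
  unfold Rdiv at 1.
  destruct (Rle_lt_dec 0 smax) as [Hp0|Hn0].
  - apply Rle_trans with ((U / sigPhi) * (kapPhi * sigPhi / L)).
    + apply Rmult_le_compat; auto. lra.
    + right. field. lra.
  - assert (smax * / smin < 0) by nra.
    assert (0 < kapPhi * (U / L)) by (apply Rmult_lt_0_compat; [lra|apply Rdiv_lt_0_compat; auto]).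
    lra.
Qed.
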